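(* Consider the following symmetric two-player game between two responders, induced by two fixed offers $s_1,s_2\in[0,1]$ with $s_1\le s_2$, $s_2>0$ and $s_2<2s_1$. Each responder chooses proposer 1 with probability $p$ and proposer 2 with probability $1-p$, where $p\in[0,1]$. If responder 1 uses $p$ and responder 2 uses $q$, the expected payoff of responder 1 is $$\Pi(p,q)=s_1\,p\Big(1-q+\tfrac{q}{2}\Big)+s_2\,(1-p)\Big(q+\tfrac{1-q}{2}\Big),$$ and that of responder 2 is $\Pi(q,p)$. Then the strategy $$p_A=\frac{2s_1-s_2}{s_1+s_2}$$ is an evolutionarily stable strategy of this game, and it is the unique evolutionarily stable strategy of this game.
   Context: The game arises from the Multi-Proposer-Multi-Responder Ultimatum Game with two proposers and two responders: each proposer $i$ offers a share $s_i$ of a reward of size one to the responders; each responder selects one proposer (possibly at random); a proposer chosen by at least one responder receives $1-s_i$; if several responders choose the same proposer, exactly one of them, chosen uniformly at random, receives $s_i$ and the others receive $0$. A strategy $p$ of a symmetric two-player game with payoff $\Pi$ is evolutionarily stable if for every strategy $q\neq p$ either $\Pi(p,p)>\Pi(q,p)$, or $\Pi(p,p)=\Pi(q,p)$ and $\Pi(p,q)>\Pi(q,q)$. *)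

(* Defs.v *)
From Stdlib Require Import Reals.
Open Scope R_scope.

Definition Pi (s1 s2 p q : R) : R :=
  s1 * p * (1 - q + q / 2) + s2 * (1 - p) * (q + (1 - q) / 2).

Definition strategy (p : R) : Prop := 0 <= p <= 1.

Definition is_ESS (s1 s2 p : R) : Prop :=
  strategy p /\
  forall q, strategy q -> q <> p ->
    Pi s1 s2 p p > Pi s1 s2 q p \/
    (Pi s1 s2 p p = Pi s1 s2 q p /\ Pi s1 s2 p q > Pi s1 s2 q q).

(* Main.v *)
Require Import Defs.
From Stdlib Require Import Reals Lra Psatz.
Open Scope R_scope.

Lemma Pi_diff s1 s2 p r q :
  Pi s1 s2 p q - Pi s1 s2 r q = (p - r) / 2 * ((2 * s1 - s2) - q * (s1 + s2)).
Proof. unfold Pi. field. Qed.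

Theorem theorem1 (s1 s2 : R) :
  0 <= s1 <= 1 -> 0 <= s2 <= 1 -> s1 <= s2 -> 0 < s2 -> s2 < 2 * s1 ->
  is_ESS s1 s2 ((2 * s1 - s2) / (s1 + s2)) /\
  (forall p, is_ESS s1 s2 p -> p = (2 * s1 - s2) / (s1 + s2)).
Proof.
  intros H1 H2 H3 H4 H5.
  set (a := (2 * s1 - s2) / (s1 + s2)).
  assert (Ha : a * (s1 + s2) = 2 * s1 - s2) by (unfold a; field; lra).
  assert (Hs : a = (2 * s1 - s2) / (s1 + s2)) by reflexivity.
  assert (Ha0 : 0 <= a).
  { nra. }
  assert (Ha1 : a <= 1).
  { nra. }
  split.
  - split. { unfold strategy; lra. }
    intros q Hq Hqa. right. split.
    + pose proof (Pi_diff s1 s2 a q a). rewrite Ha in H. nra.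
    + pose proof (Pi_diff s1 s2 a q q).
      assert (0 < (a - q) * (a - q)).
      { assert (a - q <> 0) by lra. nra. }
      apply Rminus_gt. rewrite H. rewrite <- Ha. nra.
  - intros p [Hp HE].
    destruct (Req_dec p a) as [E|E]; [exact E|].
    exfalso.
    assert (Hq : strategy a) by (unfold strategy; lra).
    assert (E' : a <> p) by auto.
    destruct (HE a Hq E') as [G|[G _]];
    pose proof (Pi_diff s1 s2 p a p) as D; rewrite <- Ha in D;
    assert (0 < (p - a) * (p - a)) by (assert (p - a <> 0) by lra; nra);
    nra.
Qed.
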